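(* In the Setting, under (SA1)–(SA2), let $\mathcal I\in\wp_k[n]$, distinct $i,j\in\mathcal I$, distinct $\alpha,\beta\in\mathcal I^{\mathtt C}$ satisfy $h(\mathcal I)h(\mathcal I^{ij}_{\alpha\beta})h(\mathcal I^i_\alpha)h(\mathcal I^i_\beta)h(\mathcal I^j_\alpha)h(\mathcal I^j_\beta)\neq0$. If $B^{ij}_{\alpha\beta}$ is a perfect square in $\Lambda$, then $Y(\mathcal I)^{ij}_{\alpha\beta}\in\mathbb C$.
   Context: Setting. $d\ge1$, $1\le k\le n$; $\mathbf t=(t_1,\dots,t_d)$ indeterminates; $\Lambda:=\mathbb C[t_1^{\pm1},\dots,t_d^{\pm1}]$ (a UFD whose units are exactly the elements $c\,\mathbf t^{\mathbf e}$, $c\in\mathbb C\setminus\{0\}$, $\mathbf e\in\mathbb Z^d$), $\mathbb F$ its fraction field, $\overline{\mathbb F}$ an algebraic closure. $[n]=\{1,\dots,n\}$, $\wp_k[n]$ the $k$-subsets. For $\mathcal I\in\wp_k[n]$: $\mathcal I^{\mathtt C}=[n]\setminus\mathcal I$; $\mathcal I^i_\alpha=(\mathcal I\setminus\{i\})\cup\{\alpha\}$; $\mathcal I^{ij}_{\alpha\beta}=(\mathcal I\setminus\{i,j\})\cup\{\alpha,\beta\}$. $\mathbf L$ ($k\times n$), $\mathbf R$ ($n\times k$) with entries in $\overline{\mathbb F}$; $\Delta_{\mathbf L}(\mathcal I)$, $\Delta_{\mathbf R}(\mathcal I)$ maximal minors on columns, resp. rows, $\mathcal I$; $h(\mathcal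 I):=\Delta_{\mathbf L}(\mathcal I)\Delta_{\mathbf R}(\mathcal I)$; $\mathfrak G:=\{\mathcal I:\Delta_{\mathbf L}(\mathcal I)\ne0\}$. (SA1) all $\Delta_{\mathbf R}(\mathcal I)\ne0$; (SA2) $h(\mathcal I)$ is a unit of $\Lambda$ for every $\mathcal I\in\mathfrak G$. $Y(\mathcal I)^{ij}_{\alpha\beta}:=-\mathrm{sign}[(i-\alpha)(i-\beta)(j-\alpha)(j-\beta)]\frac{\Delta_{\mathbf R}(\mathcal I^i_\alpha)\Delta_{\mathbf R}(\mathcal I^j_\beta)}{\Delta_{\mathbf R}(\mathcal I^i_\beta)\Delta_{\mathbf R}(\mathcal I^j_\alpha)}$. $A^{ij}_{\alpha\beta}:=h(\mathcal I)h(\mathcal I^{ij}_{\alpha\beta})-h(\mathcal I^i_\alpha)h(\mathcal I^j_\beta)-h(\mathcal I^i_\beta)h(\mathcal I^j_\alpha)$, $B^{ij}_{\alpha\beta}:=(A^{ij}_{\alpha\beta})^2-4h(\mathcal I^i_\alpha)h(\mathcal I^j_\beta)h(\mathcal I^i_\beta)h(\mathcal I^j_\alpha)$. *)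

(* Defs.v *)
From HB Require Import structures.
From mathcomp Require Import all_boot all_order all_algebra.
From mathcomp Require Import reals.
From mathcomp Require Import complex.
From mathcomp Require Import mpoly.
Set Implicit Arguments. Unset Strict Implicit. Unset Printing Implicit Defensive.
Import Order.TTheory GRing.Theory Num.Theory.
Local Open Scope ring_scope.

Definition CC (R : realType) : fieldType := R[i].

Section Setting.
Variables (R : realType) (d : nat) (K : closedFieldType).
Variables (iota : {rmorphism CC R -> K}) (t : 'I_d -> K).

Definition evt (p : {mpoly CC R[d]}) : K := mmap iota t p.

(* x lies in (the image of) Lambda = C[t_1^{+-1},...,t_d^{+-1}] inside K. *)
Definition inLambda (x : K) : Prop :=
  exists (p : {mpoly CC R[d]}) (e : nat), x = evt p / (\prod_(l < d) t l) ^+ e.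

Definition unitLambda (x : K) : Prop :=
  [/\ inLambda x, x != 0 & inLambda x^-1].

Definition inC (x : K) : Prop := exists c : CC R, x = iota c.

(* K is an algebraic closure of Frac(Lambda): K is algebraically closed,
   t_1..t_d are algebraically independent over C, and every element of K
   is algebraic over Lambda. *)
Definition is_alg_closure_of_FracLambda : Prop :=
  injective evt /\
  forall x : K, exists q : {poly K},
      [/\ q != 0, forall l : nat, inLambda q`_l & root q x].
End Setting.

Section Minors.
Variables (K : fieldType) (k n : nat).

Definition ith (I : {set 'I_n}) (b : 'I_k) : option 'I_n :=
  nth None [seq Some i | i <- enum I] b.

Definition DeltaL (L : 'M[K]_(k, n)) (I : {set 'I_n}) : K :=
  \det (\matrix_(a < k, b < k)
          (if ith I b is Some j then L a j else 0)).

Definition DeltaR (Rm : 'M[K]_(n, k)) (I : {set 'I_n}) : K :=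
  \det (\matrix_(a < k, b < k)
          (if ith I a is Some j then Rm j b else 0)).

Definition hh (L : 'M[K]_(k, n)) (Rm : 'M[K]_(n, k)) (I : {set 'I_n}) : K :=
  DeltaL L I * DeltaR Rm I.

Definition swap1 (I : {set 'I_n}) (i al : 'I_n) : {set 'I_n} := al |: (I :\ i).
Definition swap2 (I : {set 'I_n}) (i j al be : 'I_n) : {set 'I_n} :=
  al |: (be |: (I :\: [set i; j])).

Definition sgnY (i j al be : 'I_n) : int :=
  Num.sg ((Posz i - Posz al) * (Posz i - Posz be) * (Posz j - Posz al) * (Posz j - Posz be)).

Definition Ycoef (Rm : 'M[K]_(n, k)) (I : {set 'I_n}) (i j al be : 'I_n) : K :=
  - (sgnY i j al be)%:~R *
  (DeltaR Rm (swap1 I i al) * DeltaR Rm (swap1 I j be)) /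
  (DeltaR Rm (swap1 I i be) * DeltaR Rm (swap1 I j al)).

Definition Acoef L Rm I (i j al be : 'I_n) : K :=
  hh L Rm I * hh L Rm (swap2 I i j al be)
  - hh L Rm (swap1 I i al) * hh L Rm (swap1 I j be)
  - hh L Rm (swap1 I i be) * hh L Rm (swap1 I j al).

Definition Bcoef L Rm I (i j al be : 'I_n) : K :=
  (Acoef L Rm I i j al be) ^+ 2
  - 4%:R * hh L Rm (swap1 I i al) * hh L Rm (swap1 I j be)
         * hh L Rm (swap1 I i be) * hh L Rm (swap1 I j al).
End Minors.

(* Main.v *)
Require Import Defs.
From HB Require Import structures.
From mathcomp Require Import all_boot all_order all_algebra.
From mathcomp Require Import fingroup perm reals complex ssrcomplements mpoly ring zify.
Set Implicit Arguments. Unset Strict Implicit. Unset Printing Implicit Defensive.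
Import Order.TTheory GRing.Theory Num.Theory.
Local Open Scope ring_scope.
Section ML.
Variables (R : idomainType) (n : nat).
Implicit Types p q : {mpoly R[n]}.

Lemma mlastcM p q :
  (p * q)@_(mlast p + mlast q) = p@_(mlast p) * q@_(mlast q).
Proof.
have [->|nz_p] := eqVneq p 0; first by rewrite mcoeff0 !mul0r mcoeff0.
have [->|nz_q] := eqVneq q 0; first by rewrite mcoeff0 !mulr0 mcoeff0.
rewrite mpolyME (bigD1_seq (mlast p, mlast q)) /=; first last.
+ by rewrite allpairs_uniq => // -[? ?] [].
+ by rewrite allpairs_f// !mlast_supp.
rewrite mcoeffD mcoeffZ mcoeffX eqxx mulr1.
rewrite big_seq_cond raddf_sum /= big1 ?addr0 //.
case=> m1 m2; rewrite in_allpairs//= -andbA; case/and3P.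
move=> m1_in_p m2_in_q ne_m_lc; rewrite mcoeffZ mcoeffX.
move/mlast_lemc: m1_in_p; move/mlast_lemc: m2_in_q.
rewrite le_eqVlt => /predU1P[m2E|]; last first.
  by move=> lt /lemc_lt_add /(_ lt) /gt_eqF ->; rewrite mulr0.
move: ne_m_lc; rewrite -m2E xpair_eqE eqxx andbT.
rewrite le_eqVlt eq_sym => /negbTE -> /=.
by move=> lt; rewrite (gt_eqF (ltmc_le_add lt (lexx _))) mulr0.
Qed.

Lemma mpolyX_neq0 m : 'X_[m] != 0 :> {mpoly R[n]}.
Proof. by apply/eqP => /(congr1 (mcoeff m)); rewrite mcoeffX eqxx mcoeff0 => /eqP; rewrite oner_eq0. Qed.

Lemma mono_factor p q m : p * q = 'X_[m] ->
  p = p@_(mlead p) *: 'X_[mlead p].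
Proof.
move=> E.
have nz_p : p != 0 by apply: contra_eqN E => /eqP->; rewrite mul0r eq_sym mpolyX_neq0.
have nz_q : q != 0 by apply: contra_eqN E => /eqP->; rewrite mulr0 eq_sym mpolyX_neq0.
have hl : mlast p = mlead p.
  apply/eqP; apply: contraT => ne.
  have lt : (mlast p < mlead p)%O.
    by rewrite lt_neqAle ne msupp_le_mlead // mlast_supp.
  have c1 : (p * q)@_(mlead p + mlead q) != 0.
    by rewrite mleadcM mulf_neq0 // mleadc_eq0.
  have c2 : (p * q)@_(mlast p + mlast q) != 0.
    by rewrite mlastcM mulf_neq0 // -mcoeff_msupp mlast_supp.
  have h1 : m == (mlead p + mlead q)%MM.
    by move: c1; rewrite E mcoeffX; case: (m == _) => //; rewrite eqxx.
  have h2 : m == (mlast p + mlast q)%MM.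
    by move: c2; rewrite E mcoeffX; case: (m == _) => //; rewrite eqxx.
  move: h2; rewrite (eqP h1) => /eqP E2.
  have := ltmc_le_add lt (msupp_le_mlead (mlast_supp nz_q)).
  by rewrite E2 ltxx.
apply/mpolyP => m0; rewrite mcoeffZ mcoeffX.
have [<-|ne] := eqVneq (mlead p) m0; first by rewrite mulr1.
rewrite mulr0; apply/eqP; rewrite mcoeff_eq0; apply: contra ne => mi.
  by rewrite eq_le msupp_le_mlead //= -hl andbT mlast_lemc.
Qed.
End ML.

Section Lam.
Variables (R : realType) (d : nat) (K : closedFieldType).
Variables (iota : {rmorphism CC R -> K}) (t : 'I_d -> K).
Hypothesis inj : injective (evt iota t).

Local Notation ev := (evt iota t).
Local Notation Lam := (inLambda iota t).
Local Notation U := (unitLambda iota t).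

Definition mone : 'X_{1..d} := [multinom 1%N | _ < d].
Definition Tm : {mpoly (CC R)[d]} := 'X_[mone].
Definition TT : K := \prod_(l < d) t l.

Lemma evM p q : ev (p * q) = ev p * ev q.
Proof. by rewrite /evt rmorphM. Qed.
Lemma evD p q : ev (p + q) = ev p + ev q.
Proof. by rewrite /evt rmorphD. Qed.
Lemma evC c : ev c%:MP = iota c.
Proof. by rewrite /evt mmapC. Qed.
Lemma ev0 : ev 0 = 0.
Proof. by rewrite /evt rmorph0. Qed.
Lemma evXn p e : ev (p ^+ e) = ev p ^+ e.
Proof. by rewrite /evt rmorphXn. Qed.
Lemma evT : ev Tm = TT.
Proof. rewrite /evt /Tm mmapX /mmap1 /TT; apply: eq_bigr => l _; by rewrite mnmE expr1. Qed.
Lemma evZ c p : ev (c *: p) = iota c * ev p.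
Proof. by rewrite /evt mmapZ. Qed.

Lemma TT_neq0 : TT != 0.
Proof.
apply/eqP => h; have : ev Tm = ev 0 by rewrite evT ev0.
move/inj => /(congr1 (mcoeff mone)).
by rewrite /Tm mcoeffX eqxx mcoeff0 => /eqP; rewrite oner_eq0.
Qed.

Lemma LamC c : Lam (iota c).
Proof. by exists c%:MP, 0%N; rewrite evC expr0 divr1. Qed.

Lemma LamM x y : Lam x -> Lam y -> Lam (x * y).
Proof.
move=> [p [a ->]] [q [b ->]]; exists (p * q), (a + b)%N.
by rewrite evM exprD invfM mulrACA.
Qed.

Lemma LamD x y : Lam x -> Lam y -> Lam (x + y).
Proof.
move=> [p [a ->]] [q [b ->]]; exists (p * Tm ^+ b + q * Tm ^+ a), (a + b)%N.
rewrite evD !evM !evXn evT exprD.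
have := TT_neq0 => nz.
field; by rewrite !expf_neq0.
Qed.

Lemma LamN x : Lam x -> Lam (- x).
Proof. by move=> Lx; rewrite -mulN1r -(rmorphN1 iota); apply: LamM => //; apply: LamC. Qed.

Lemma LamB x y : Lam x -> Lam y -> Lam (x - y).
Proof. by move=> Lx Ly; apply: LamD => //; apply: LamN. Qed.

Lemma Lam1 : Lam 1.
Proof. by rewrite -(rmorph1 iota); apply: LamC. Qed.

Lemma UM x y : U x -> U y -> U (x * y).
Proof.
move=> [Lx nx Lx'] [Ly ny Ly']; split; first exact: LamM.
  by rewrite mulf_neq0.
by rewrite invfM; apply: LamM.
Qed.

Lemma UV x : U x -> U x^-1.
Proof. by move=> [Lx nx Lx']; split; rewrite ?invr_eq0 ?invrK. Qed.

Lemma U_factor x y : Lam x -> Lam y -> U (x * y) -> U x.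
Proof.
move=> Lx Ly [_ nxy Lxy']; have nx : x != 0 by apply: contraNneq nxy => ->; rewrite mul0r.
have ny : y != 0 by apply: contraNneq nxy => ->; rewrite mulr0.
split => //; have -> : x^-1 = y * (x * y)^-1 by rewrite invfM mulrCA divff // mulr1.
exact: LamM.
Qed.

Lemma UC c : c != 0 -> U (iota c).
Proof.
move=> nc; split; first exact: LamC.
  by rewrite fmorph_eq0.
by rewrite -fmorphV; apply: LamC.
Qed.

Lemma key x : U x -> U (1 + x) -> inC iota x.
Proof.
move=> [[p [a Ex]] nx [p' [b Ex']]] [_ n1x [q' [c Eq]]].
have nT := TT_neq0.
have E1 : p * p' = 'X_[mone *+ (a + b)].
  apply: inj; rewrite evM -mpolyXn evXn evT.
  have ep : ev p = x * TT ^+ a by rewrite Ex; field; rewrite expf_neq0.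
  have ep' : ev p' = x^-1 * TT ^+ b by rewrite Ex'; field; rewrite expf_neq0.
  by rewrite ep ep' exprD; field.
set r := Tm ^+ a + p.
have Er : 1 + x = ev r / TT ^+ a.
  rewrite /r evD evXn evT Ex; field; by rewrite expf_neq0.
have E2 : r * q' = 'X_[mone *+ (a + c)].
  apply: inj; rewrite evM -mpolyXn evXn evT.
  have er : ev r = (1 + x) * TT ^+ a by rewrite Er; field; rewrite expf_neq0.
  have eq' : ev q' = (1 + x)^-1 * TT ^+ c by rewrite Eq; field; rewrite expf_neq0.
  by rewrite er eq' exprD; field.
have Fp := mono_factor E1; have Fr := mono_factor E2.
set c1 := mleadc p in Fp; set n1 := mlead p in Fp.
set c2 := mleadc r in Fr; set n2 := mlead r in Fr.
have Tma : Tm ^+ a = 'X_[mone *+ a] by rewrite /Tm mpolyXn.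
have c1nz : c1 != 0.
  apply: contraNneq nx => c10; rewrite Ex Fp c10 scale0r ev0 mul0r //.
have hn : n1 = (mone *+ a)%MM.
  apply/eqP; apply: contraT => ne.
  have h1 := congr1 (mcoeff (mone *+ a)%MM) Fr.
  have h2 := congr1 (mcoeff n1) Fr.
  rewrite /r Fp Tma !mcoeffD !mcoeffZ !mcoeffX eqxx in h1 h2.
  rewrite (negbTE ne) mulr0 addr0 in h1.
  rewrite eqxx mulr1 eq_sym (negbTE ne) add0r in h2.
  have e2 : (n2 == (mone *+ a)%MM).
    by apply: contraTT (oner_neq0 (CC R)) => /negbTE ne2; rewrite negbK -[1]/(true%:R) h1 ne2 mulr0.
  by move: h2; rewrite (eqP e2) eq_sym (negbTE ne) mulr0 => /eqP; rewrite (negbTE c1nz).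
exists c1; rewrite Ex Fp evZ -/n1 hn -mpolyXn evXn evT; field; by rewrite expf_neq0.
Qed.

Lemma two_neq0 : (2%:R : K) != 0.
Proof.
have h : (2%:R : CC R) != 0 by rewrite pnatr_eq0.
by rewrite -(rmorph_nat iota) fmorph_eq0.
Qed.

Lemma core (u v w z A q c : K) :
  (c = 1 \/ c = -1) -> U u -> U v -> U (u + v + c * (w + z)) -> w * z = u * v ->
  A = c * (w + z) -> Lam A -> Lam q -> A ^+ 2 - 4%:R * (u * v) = q ^+ 2 ->
  inC iota (u / w) /\ w != 0.
Proof.
move=> hc Uu Uv Um hwz hA LA Lq hB.
have [cc [Ec ncc]] : exists cc, c = iota cc /\ cc != 0.
  case: hc => ->; [exists 1; rewrite rmorph1 oner_neq0 | exists (-1); rewrite rmorphN1 oppr_eq0 oner_neq0] => //.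
have Uc : U c by rewrite Ec; apply: UC.
have Lc : Lam c by case: Uc.
have hq : q ^+ 2 = (w - z) ^+ 2.
  rewrite -hB hA -hwz; case: hc => ->; ring.
have Lwz : Lam (w - z).
  move/eqP: hq; rewrite eqf_sqr => /orP[/eqP <-//|/eqP hq'].
  by rewrite -[w - z]opprK -hq'; apply: LamN.
have L2 : Lam (2%:R^-1 : K).
  by rewrite -(rmorph_nat iota) -fmorphV; apply: LamC.
have Lw : Lam w.
  have -> : w = (c * A + (w - z)) * 2%:R^-1.
    rewrite hA; have := two_neq0 => h2; case: hc => ->; by field.
  by apply: LamM => //; apply: LamD => //; apply: LamM.
have Lz : Lam z.
  have -> : z = c * A - w by rewrite hA; case: hc => ->; ring.
  by apply: LamB => //; apply: LamM.
have Uw : U w by apply: (U_factor Lw Lz); rewrite hwz; apply: UM.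
have nu : u != 0 by case: Uu.
have nw : w != 0 by case: Uw.
set x := c * w / u.
have Ux : U x by apply: UM; [apply: UM | apply: UV].
have Lx : Lam x by case: Ux.
have Lf : Lam (u + c * z) by apply: LamD; [case: Uu | apply: LamM].
have hm : (1 + x) * (u + c * z) = u + v + c * (w + z).
  have -> : (1 + x) * (u + c * z) = u + c * (w + z) + c ^+ 2 * (w * z) / u.
    by rewrite /x; field.
  have c2 : c ^+ 2 = 1 by case: hc => ->; rewrite ?sqrrN expr1n.
  by rewrite hwz c2; field.
have U1x : U (1 + x) by apply: (U_factor _ Lf); [apply: LamD => //; apply: Lam1 | rewrite hm].
have [cx Ex] := key Ux U1x.
have ncx : cx != 0 by move: Ux => [_ + _]; rewrite Ex fmorph_eq0.
split => //; exists (cc / cx); rewrite fmorph_div -Ec -Ex /x.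
by field; rewrite nw nu; case: hc => ->; rewrite ?oppr_eq0 oner_neq0.
Qed.

Lemma final_alg (dI dJ d3 d4 d5 d6 lI lJ l3 l4 l5 l6 c1 c2 q : K) (sg : int) :
  c1 ^+ 2 = 1 -> c2 ^+ 2 = 1 ->
  dI * dJ = c1 * (d3 * d4) + c2 * (d5 * d6) ->
  lI * lJ = c1 * (l3 * l4) + c2 * (l5 * l6) ->
  U (lI * dI) -> U (lJ * dJ) -> U (l3 * d3) -> U (l4 * d4) ->
  U (l5 * d5) -> U (l6 * d6) -> Lam q ->
  ((lI * dI) * (lJ * dJ) - (l3 * d3) * (l4 * d4) - (l5 * d5) * (l6 * d6)) ^+ 2
    - 4%:R * (l3 * d3) * (l4 * d4) * (l5 * d5) * (l6 * d6) = q ^+ 2 ->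
  inC iota (- sg%:~R * (d3 * d4) / (d5 * d6)).
Proof.
move=> hc1 hc2 hd hl UI UJ U3 U4 U5 U6 Lq hB.
have hc1' : c1 = 1 \/ c1 = -1.
  by move/eqP: hc1; rewrite sqrf_eq1 => /orP[/eqP|/eqP]; [left|right].
have hc2' : c2 = 1 \/ c2 = -1.
  by move/eqP: hc2; rewrite sqrf_eq1 => /orP[/eqP|/eqP]; [left|right].
set u := (l3 * l4) * (d3 * d4); set v := (l5 * l6) * (d5 * d6).
set w := (l3 * l4) * (d5 * d6); set z := (l5 * l6) * (d3 * d4).
set A := (lI * dI) * (lJ * dJ) - (l3 * d3) * (l4 * d4) - (l5 * d5) * (l6 * d6).
have Uu : U u.
  have -> : u = (l3 * d3) * (l4 * d4) by rewrite /u mulrACA.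
  by apply: UM.
have Uv : U v.
  have -> : v = (l5 * d5) * (l6 * d6) by rewrite /v mulrACA.
  by apply: UM.
have hm : (lI * dI) * (lJ * dJ) = u + v + (c1 * c2) * (w + z).
  rewrite (_ : _ * _ = (lI * lJ) * (dI * dJ)); last by rewrite mulrACA.
  rewrite hd hl /u /v /w /z.
  by case: hc1' => ->; case: hc2' => ->; ring.
have Um : U (u + v + c1 * c2 * (w + z)) by rewrite -hm; apply: UM.
have hwz : w * z = u * v by rewrite /w /z /u /v; ring.
have hA : A = c1 * c2 * (w + z).
  by rewrite /A hm /u /v; ring.
have LA : Lam A.
  case: UI => LI _ _; case: UJ => LJ _ _; case: U3 => L3 _ _; case: U4 => L4 _ _.
  case: U5 => L5 _ _; case: U6 => L6 _ _.
  by rewrite /A; apply: LamB; [apply: LamB|]; apply: LamM.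
have hc : c1 * c2 = 1 \/ c1 * c2 = -1.
  by case: hc1' => ->; case: hc2' => ->; rewrite ?mulN1r ?mul1r ?opprK; [left|right|right|left].
have hB' : A ^+ 2 - 4%:R * (u * v) = q ^+ 2.
  by rewrite -hB /A /u /v; ring.
have [[cu Ecu] nw] := core hc Uu Uv Um hwz hA LA Lq hB'.
have nl : l3 * l4 != 0.
  by rewrite mulf_neq0 //; [case: U3 | case: U4] => _ /=; rewrite mulf_eq0 => /norP[].
have nd : d5 * d6 != 0 by move: nw; rewrite /w mulf_eq0 negb_or => /andP[].
move: nd nl; rewrite !mulf_eq0 !negb_or => /andP[n5 n6] /andP[n3 n4].
exists (- sg%:~R * cu); rewrite rmorphM rmorphN rmorph_int -Ecu /u /w.
by field; rewrite n3 n4 n5 n6.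
Qed.
End Lam.

Section Det.
Variable F : fieldType.

Lemma det_row_lin p (A : 'M[F]_p) (i0 : 'I_p) : exists c : 'cV[F]_p,
  forall y : 'rV[F]_p,
  \det (\matrix_(r, c) (if r == i0 then y 0 c else A r c)) = (y *m c) 0 0.
Proof.
exists (\col_j cofactor A i0 j) => y.
rewrite (expand_det_row _ i0) !mxE; apply: eq_bigr => j _; rewrite !mxE eqxx.
congr (_ * _); rewrite /cofactor; congr (_ * \det _).
by apply/matrixP => a b; rewrite !mxE eq_sym (negbTE (neq_lift _ _)).
Qed.

Variable m : nat.
Local Notation k := m.+2.
Definition penult : 'I_k := inord m.
Lemma penult_neq : penult != ord_max.
Proof. have h : (m < m.+2)%N by rewrite ltnS leqnSn. by rewrite -val_eqE /= inordK // (ltn_eqF (ltnSn m)). Qed.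

Definition Gm (W : 'M[F]_k) (x y : 'rV[F]_k) : 'M[F]_k :=
  \matrix_(r, c) (if r == ord_max then y 0 c else if r == penult then x 0 c else W r c).
Definition Ev W x y := \det (Gm W x y).

Lemma EvR W x : exists c : 'cV[F]_k, forall y, Ev W x y = (y *m c) 0 0.
Proof.
have [c Hc] := det_row_lin (Gm W x 0) ord_max.
exists c => y; rewrite -Hc /Ev; congr (\det _); apply/matrixP => r c'.
by rewrite !mxE; case: eqP.
Qed.

Lemma EvL W y : exists c : 'cV[F]_k, forall x, Ev W x y = (x *m c) 0 0.
Proof.
have [c Hc] := det_row_lin (Gm W 0 y) penult.
exists c => x; rewrite -Hc /Ev; congr (\det _); apply/matrixP => r c'.
rewrite !mxE; have [->|] := eqVneq r penult; last by [].
by rewrite (negbTE penult_neq).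
Qed.

Lemma Ev_xx W x : Ev W x x = 0.
Proof.
apply: (determinant_alternate penult_neq) => c; rewrite !mxE eqxx.
by rewrite !eqxx; case: ifP.
Qed.

Lemma Ev_rowl W r y : r != penult -> r != ord_max -> Ev W (row r W) y = 0.
Proof.
move=> h1 h2; apply: (determinant_alternate h1) => c; rewrite !mxE.
by rewrite (negbTE h1) (negbTE h2) (negbTE penult_neq) eqxx.
Qed.

Lemma Ev_rowr W r x : r != penult -> r != ord_max -> Ev W x (row r W) = 0.
Proof.
move=> h1 h2; apply: (determinant_alternate h2) => c; rewrite !mxE.
by rewrite (negbTE h1) (negbTE h2) eqxx.
Qed.

Lemma Ev_anti W x y : Ev W y x = - Ev W x y.
Proof.
have [cx Hx] := EvR W x; have [cy Hy] := EvR W y.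
have [e He] := EvL W (x + y).
have h := Ev_xx W (x + y).
have h1 : Ev W (x + y) (x + y) = Ev W x (x + y) + Ev W y (x + y).
  by rewrite !He mulmxDl mxE.
have h2 : Ev W x (x + y) = Ev W x x + Ev W x y by rewrite !Hx mulmxDl mxE.
have h3 : Ev W y (x + y) = Ev W y x + Ev W y y by rewrite !Hy mulmxDl mxE.
rewrite h1 h2 h3 !Ev_xx add0r addr0 in h.
by apply/eqP; rewrite -addr_eq0 addrC h.
Qed.

Lemma vanish_all W a b (f : 'rV[F]_k -> F) (c : 'cV[F]_k) :
  Ev W a b != 0 -> (forall y, f y = (y *m c) 0 0) -> f a = 0 -> f b = 0 ->
  (forall r, r != penult -> r != ord_max -> f (row r W) = 0) -> forall y, f y = 0.
Proof.
move=> nz Hf fa fb fr.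
have Mc : Gm W a b *m c = 0.
  apply/matrixP => r j; rewrite [j]ord1 [in RHS]mxE.
  have -> : (Gm W a b *m c) r 0 = (row r (Gm W a b) *m c) 0 0.
    by rewrite !mxE; apply: eq_bigr => l _; rewrite !mxE.
  rewrite -Hf.
  have [->|n1] := eqVneq r ord_max.
    by rewrite (_ : row _ _ = b) //; apply/rowP => j'; rewrite !mxE eqxx.
  have [->|n2] := eqVneq r penult.
    rewrite (_ : row _ _ = a) //; apply/rowP => j'.
    by rewrite !mxE (negbTE penult_neq) eqxx.
  by rewrite (_ : row _ _ = row r W) ?fr //; apply/rowP => j'; rewrite !mxE (negbTE n1) (negbTE n2).
have U : Gm W a b \in unitmx by rewrite unitmxE unitfE.
have c0 : c = 0 by rewrite -(mulKmx U c) Mc mulmx0.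
by move=> y; rewrite Hf c0 mulmx0 mxE.
Qed.

Lemma plucker W x1 x2 x3 x4 :
  Ev W x1 x2 * Ev W x3 x4 - Ev W x1 x3 * Ev W x2 x4 + Ev W x1 x4 * Ev W x2 x3 = 0.
Proof.
have [cL4 HL4] := EvL W x4; have [cR1 HR1] := EvR W x1; have [cR2 HR2] := EvR W x2.
set e12 := Ev W x1 x2; set e24 := Ev W x2 x4; set e14 := Ev W x1 x4.
pose f y := e12 * Ev W y x4 - Ev W x1 y * e24 + e14 * Ev W x2 y.
pose cF := e12 *: cL4 - e24 *: cR1 + e14 *: cR2.
have Hf : forall y, f y = (y *m cF) 0 0.
  move=> y; rewrite /f /cF mulmxDr mulmxBr -!scalemxAr. rewrite HL4 HR1 HR2 !mxE.
  ring.
have fr : forall r, r != penult -> r != ord_max -> f (row r W) = 0.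
  by move=> r h1 h2; rewrite /f Ev_rowl // Ev_rowr // Ev_rowr // !mulr0 mul0r subrr addr0.
have -> : e12 * Ev W x3 x4 - Ev W x1 x3 * e24 + e14 * Ev W x2 x3 = f x3 by [].
have [z12|nz12] := eqVneq e12 0.
  have [z14|nz14] := eqVneq e14 0.
    rewrite /f z12 z14 !mul0r sub0r addr0.
    have [z24|nz24] := eqVneq e24 0; first by rewrite z24 mulr0 oppr0.
    have := @vanish_all W x2 x4 (fun y => Ev W x1 y) cR1 nz24 HR1 _ _ _ x3.
    move=> -> //; rewrite ?mul0r ?oppr0 //.
    by move=> r h1 h2; rewrite Ev_rowr.
  apply: (vanish_all nz14 Hf) => //.
    by rewrite /f Ev_xx (Ev_anti W x1 x2) -/e12 z12; ring.
  by rewrite /f Ev_xx z12 -/e14 -/e24; ring.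
apply: (vanish_all nz12 Hf) => //.
  by rewrite /f Ev_xx (Ev_anti W x1 x2) -/e12 -/e14; ring.
by rewrite /f Ev_xx -/e12 -/e24; ring.
Qed.
End Det.


Section Sign.
Variables (F : fieldType) (n p : nat).

Definition MR (A : 'M[F]_(n, p)) (g : 'I_p -> 'I_n) : 'M[F]_p :=
  \matrix_(r, c) A (g r) c.

Lemma DeltaL_tr (L : 'M[F]_(p, n)) J : DeltaL L J = DeltaR L^T J.
Proof.
rewrite /DeltaL /DeltaR -det_tr; congr (\det _); apply/matrixP => a b.
by rewrite !mxE; case: ith => // j; rewrite mxE.
Qed.

Lemma cover (g : 'I_p -> 'I_n) (J : {set 'I_n}) : injective g -> (forall r, g r \in J) ->
  #|J| = p -> forall j, j \in J -> exists r, g r = j.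
Proof.
move=> ig gJ cJ j jJ.
have E : [set g r | r : 'I_p] = J.
  apply/eqP; rewrite eqEcard card_imset // card_ord cJ leqnn andbT.
  by apply/subsetP => x /imsetP[r _ ->].
by move: jJ; rewrite -E => /imsetP[r _ ->]; exists r.
Qed.

Lemma sign_rep (J : {set 'I_n}) (g : 'I_p -> 'I_n) (x0 : 'I_n) : #|J| = p -> injective g ->
  (forall r, g r \in J) ->
  exists e : F, e ^+ 2 = 1 /\ forall A : 'M[F]_(n, p), DeltaR A J = e * \det (MR A g).
Proof.
move=> cJ ig gJ.
pose f (r : 'I_p) := nth x0 (enum J) r.
have sz : size (enum J) = p by rewrite -cardE.
have fJ : forall r, f r \in J by move=> r; rewrite -mem_enum mem_nth // sz.
have hf : forall A : 'M[F]_(n, p), DeltaR A J = \det (MR A f).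
  move=> A; rewrite /DeltaR; congr (\det _); apply/matrixP => a b.
  by rewrite !mxE /ith (nth_map x0) // sz.
pose h (r : 'I_p) := odflt r [pick r' | g r' == f r].
have gh : forall r, g (h r) = f r.
  move=> r; rewrite /h; case: pickP => [r' /eqP //|none].
  have [r' er] := cover ig gJ cJ (fJ r).
  by move: (none r'); rewrite er eqxx.
have ih : injective h.
  move=> a b e; have := congr1 g e; rewrite !gh /f => /eqP.
  rewrite nth_uniq ?sz ?enum_uniq // => /eqP; exact: ord_inj.
pose s := perm ih.
exists ((-1) ^+ s); split; first exact: sqrr_sign.
move=> A; rewrite hf.
have -> : MR A f = row_perm s (MR A g).
  by apply/matrixP => a b; rewrite !mxE permE gh.
by rewrite row_permE det_mulmx det_perm.
Qed.
End Sign.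

Section Reps.
Variables (F : fieldType) (n m : nat) (S : {set 'I_n}) (x0 : 'I_n).
Hypothesis hS : #|S| = m.

Definition sS (r : 'I_m.+2) : 'I_n := nth x0 (enum S) r.
Definition gg (a b : 'I_n) (r : 'I_m.+2) : 'I_n :=
  if r == ord_max then b else if r == penult m then a else sS r.
Definition WA (A : 'M[F]_(n, m.+2)) : 'M[F]_m.+2 := \matrix_(r, c) A (sS r) c.

Lemma gen_lt (r : 'I_m.+2) : r != ord_max -> r != penult m -> (r < m)%N.
Proof.
move=> h1 h2; have h : (m < m.+2)%N by rewrite ltnS leqnSn.
move: h1 h2; rewrite -!val_eqE /= inordK //.
have := ltn_ord r; lia.
Qed.

Lemma sS_in (r : 'I_m.+2) : (r < m)%N -> sS r \in S.
Proof. by move=> h; rewrite /sS -mem_enum mem_nth // -cardE hS. Qed.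

Lemma gg_inj a b : a != b -> a \notin S -> b \notin S -> injective (gg a b).
Proof.
move=> nab aS bS r1 r2; rewrite /gg.
have pm := penult_neq m.
have [e1|n1] := eqVneq r1 ord_max; have [e2|n2] := eqVneq r2 ord_max.
- by rewrite e1 e2.
- have [e2'|n2'] := eqVneq r2 (penult m); first by move=> e; move: nab; rewrite e eqxx.
  by move=> e; move: bS; rewrite e sS_in // gen_lt.
- have [e1'|n1'] := eqVneq r1 (penult m); first by move=> e; move: nab; rewrite e eqxx.
  by move=> e; move: bS; rewrite -e sS_in // gen_lt.
have [e1'|n1'] := eqVneq r1 (penult m); have [e2'|n2'] := eqVneq r2 (penult m).
- by rewrite e1' e2'.
- by move=> e; move: aS; rewrite e sS_in // gen_lt.
- by move=> e; move: aS; rewrite -e sS_in // gen_lt.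
move=> /eqP; rewrite /sS nth_uniq ?enum_uniq // -?cardE ?hS ?gen_lt // => /eqP.
exact: ord_inj.
Qed.

Lemma MR_gg (A : 'M[F]_(n, m.+2)) a b :
  MR A (gg a b) = Gm (WA A) (row a A) (row b A).
Proof.
apply/matrixP => r c; rewrite !mxE /gg.
by case: eqP => _; rewrite ?mxE //; case: eqP => _; rewrite ?mxE.
Qed.

Lemma rep (J : {set 'I_n}) a b : #|J| = m.+2 -> a != b -> a \notin S -> b \notin S ->
  a \in J -> b \in J -> S \subset J ->
  exists e : F, e ^+ 2 = 1 /\ forall A : 'M[F]_(n, m.+2),
    DeltaR A J = e * Ev (WA A) (row a A) (row b A).
Proof.
move=> cJ nab aS bS aJ bJ sJ.
have gJ : forall r, gg a b r \in J.
  move=> r; rewrite /gg; case: eqP => // /eqP n1; case: eqP => // /eqP n2.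
  by apply: (subsetP sJ); apply: sS_in; apply: gen_lt.
have [e [e2 He]] := @sign_rep F n m.+2 J (gg a b) x0 cJ (gg_inj nab aS bS) gJ.
by exists e; split => // A; rewrite He MR_gg.
Qed.
End Reps.

Lemma swap1_facts n (I S : {set 'I_n}) x y z : x \in I -> y \notin I -> z \in I ->
  z != x -> S \subset I :\ x ->
  [/\ #|swap1 I x y| = #|I|, z \in swap1 I x y, y \in swap1 I x y & S \subset swap1 I x y].
Proof.
move=> xI yI zI zx SI; split.
- rewrite /swap1 cardsU1 (cardsD1 x I) xI in_setD1 (negbTE yI) andbF //.
- by rewrite /swap1 in_setU1 in_setD1 zx zI orbT.
- by rewrite /swap1 in_setU1 eqxx.
- by apply: (subset_trans SI); apply/subsetP => w wI; rewrite /swap1 in_setU1 wI orbT.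
Qed.

Lemma rel_gen (F : fieldType) (Pij Pab Pia Pjb Pib Pja e1 e2 e3 e4 e5 e6 : F) :
  e3 ^+ 2 = 1 -> e4 ^+ 2 = 1 -> e5 ^+ 2 = 1 -> e6 ^+ 2 = 1 ->
  Pij * Pab - Pia * Pjb + Pib * Pja = 0 ->
  (e1 * Pij) * (e2 * Pab) = (- (e1 * e2 * e3 * e4)) * ((e3 * Pja) * (e4 * Pib))
     + (e1 * e2 * e5 * e6) * ((e5 * Pjb) * (e6 * Pia)).
Proof.
move=> h3 h4 h5 h6 pl.
have -> : (- (e1 * e2 * e3 * e4)) * ((e3 * Pja) * (e4 * Pib))
     + (e1 * e2 * e5 * e6) * ((e5 * Pjb) * (e6 * Pia)) =
     e1 * e2 * (- (e3 ^+ 2 * e4 ^+ 2) * (Pib * Pja) + e5 ^+ 2 * e6 ^+ 2 * (Pia * Pjb)) by ring.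
rewrite h3 h4 h5 h6 !mul1r.
have -> : e1 * Pij * (e2 * Pab) = e1 * e2 * (Pij * Pab) by ring.
have -> : Pij * Pab = Pia * Pjb - Pib * Pja.
  by apply/eqP; rewrite -subr_eq0; apply/eqP; rewrite -pl; ring.
ring.
Qed.

Theorem mainTheorem5 (R : realType) (d : nat) (K : closedFieldType)
  (iota : {rmorphism CC R -> K}) (t : 'I_d -> K)
  (hd : (0 < d)%N)
  (hK : is_alg_closure_of_FracLambda iota t)
  (k n : nat) (hk : (1 <= k <= n)%N)
  (L : 'M[K]_(k, n)) (Rm : 'M[K]_(n, k))
  (SA1 : forall J : {set 'I_n}, #|J| = k -> DeltaR Rm J != 0)
  (SA2 : forall J : {set 'I_n}, #|J| = k -> DeltaL L J != 0 ->
           unitLambda iota t (hh L Rm J))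
  (I : {set 'I_n}) (hI : #|I| = k) (i j al be : 'I_n)
  (hi : i \in I) (hj : j \in I) (hij : i != j)
  (hal : al \notin I) (hbe : be \notin I) (halbe : al != be)
  (hnz : hh L Rm I * hh L Rm (swap2 I i j al be)
         * hh L Rm (swap1 I i al) * hh L Rm (swap1 I i be)
         * hh L Rm (swap1 I j al) * hh L Rm (swap1 I j be) != 0) :
  (exists q : K, inLambda iota t q /\ Bcoef L Rm I i j al be = q ^+ 2) ->
  inC iota (Ycoef Rm I i j al be).
Proof.
move=> [q [Lq hB]].
have inj : injective (evt iota t) by case: hK.
set S := I :\: [set i; j].
have iS : i \notin S by rewrite !inE eqxx.
have jS : j \notin S by rewrite !inE eqxx orbT.
have alS : al \notin S by rewrite !inE (negbTE hal) andbF.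
have beS : be \notin S by rewrite !inE (negbTE hbe) andbF.
have SI : S \subset I by apply: subsetDl.
have SIi : S \subset I :\ i.
  by apply/subsetP => x; rewrite !inE negb_or => /andP[/andP[-> _] ->].
have SIj : S \subset I :\ j.
  by apply/subsetP => x; rewrite !inE negb_or => /andP[/andP[_ ->] ->].
have ji : j \in I :\ i by rewrite in_setD1 eq_sym hij hj.
have ES : I :\ i :\ j = S.
  by apply/setP => x; rewrite !inE; case: (x == i); case: (x == j).
have cI : #|I| = #|S|.+2.
  by rewrite (cardsD1 i I) hi (cardsD1 j (I :\ i)) ji ES.
have [m Em] : exists m, #|S| = m by eexists.
have km : k = m.+2 by rewrite -hI cI Em.
move: hI; subst k => hI.
have hji : j != i by rewrite eq_sym.
have nal_j : j != al by apply: contraNneq hal => <-.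
have nal_i : i != al by apply: contraNneq hal => <-.
have nbe_j : j != be by apply: contraNneq hbe => <-.
have nbe_i : i != be by apply: contraNneq hbe => <-.
have [c3 h3 a3 s3] := swap1_facts hi hal hj hji SIi.
have [c4 h4 a4 s4] := swap1_facts hj hbe hi hij SIj.
have [c5 h5 a5 s5] := swap1_facts hi hbe hj hji SIi.
have [c6 h6 a6 s6] := swap1_facts hj hal hi hij SIj.
have c2 : #|swap2 I i j al be| = m.+2.
  rewrite /swap2 -/S cardsU1 in_setU1 (negbTE halbe) (negbTE alS) /=.
  by rewrite cardsU1 beS Em.
have h2a : al \in swap2 I i j al be by rewrite /swap2 in_setU1 eqxx.
have h2b : be \in swap2 I i j al be by rewrite /swap2 !in_setU1 eqxx orbT.
have s2 : S \subset swap2 I i j al be.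
  by apply/subsetP => x xS; rewrite /swap2 -/S !in_setU1 xS !orbT.
rewrite hI in c3 c4 c5 c6.
have [e1 [q1 H1]] := @rep K n m S i Em _ _ _ hI hij iS jS hi hj SI.
have [e2 [q2 H2]] := @rep K n m S i Em _ _ _ c2 halbe alS beS h2a h2b s2.
have [e3 [q3 H3]] := @rep K n m S i Em _ _ _ c3 nal_j jS alS h3 a3 s3.
have [e4 [q4 H4]] := @rep K n m S i Em _ _ _ c4 nbe_i iS beS h4 a4 s4.
have [e5 [q5 H5]] := @rep K n m S i Em _ _ _ c5 nbe_j jS beS h5 a5 s5.
have [e6 [q6 H6]] := @rep K n m S i Em _ _ _ c6 nal_i iS alS h6 a6 s6.
set W := @WA K n m S i Rm; set WL := @WA K n m S i L^T.
have plR := plucker W (row i Rm) (row j Rm) (row al Rm) (row be Rm).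
have plL := plucker WL (row i L^T) (row j L^T) (row al L^T) (row be L^T).
set c1 := - (e1 * e2 * e3 * e4); set c2' := e1 * e2 * e5 * e6.
have hdrel : DeltaR Rm I * DeltaR Rm (swap2 I i j al be) =
    c1 * (DeltaR Rm (swap1 I i al) * DeltaR Rm (swap1 I j be))
    + c2' * (DeltaR Rm (swap1 I i be) * DeltaR Rm (swap1 I j al)).
  rewrite (H1 Rm) (H2 Rm) (H3 Rm) (H4 Rm) (H5 Rm) (H6 Rm).
  exact: rel_gen q3 q4 q5 q6 plR.
have hlrel : DeltaL L I * DeltaL L (swap2 I i j al be) =
    c1 * (DeltaL L (swap1 I i al) * DeltaL L (swap1 I j be))
    + c2' * (DeltaL L (swap1 I i be) * DeltaL L (swap1 I j al)).
  rewrite !DeltaL_tr (H1 L^T) (H2 L^T) (H3 L^T) (H4 L^T) (H5 L^T) (H6 L^T).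
  exact: rel_gen q3 q4 q5 q6 plL.
have qc1 : c1 ^+ 2 = 1 by rewrite /c1 sqrrN !exprMn q1 q2 q3 q4 !mul1r.
have qc2 : c2' ^+ 2 = 1 by rewrite /c2' !exprMn q1 q2 q5 q6 !mul1r.
have nzL : forall J, hh L Rm J != 0 -> DeltaL L J != 0.
  by move=> J; rewrite /hh mulf_eq0 negb_or => /andP[].
move: hnz; rewrite !mulf_eq0 !negb_or => /andP[/andP[/andP[/andP[/andP[nI nI2] n3] n5] n6] n4].
have U1 := SA2 _ hI (andP nI).1.
have U2 := SA2 _ c2 (andP nI2).1.
have U3 := SA2 _ c3 (andP n3).1.
have U4 := SA2 _ c4 (andP n4).1.
have U5 := SA2 _ c5 (andP n5).1.
have U6 := SA2 _ c6 (andP n6).1.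
rewrite /Ycoef.
have F0 := @final_alg R d K iota t inj _ _ _ _ _ _ _ _ _ _ _ _ _ _ _ (sgnY i j al be) qc1 qc2 hdrel hlrel U1 U2 U3 U4 U5 U6 Lq.
exact: (F0 hB).
Qed.
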